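(* Let $A$, $\bar A$, $H$ be as in the context. Then $\frac m4\le\kappa([\bar A;A])=\kappa(H)=\frac{\sin\left(\frac{(3m_1m_2-1)\pi}{6m_1m_2}\right)}{\sin\left(\frac{\pi}{6m_1m_2}\right)}<m$.
   Context: Let $L_f>0$, integers $m_1\ge2$, $m_2\ge1$ with $m_1m_2$ even, $m=3m_1m_2$, $\bar d\ge5$ odd. $J_p\in\mathbb R^{(p-1)\times p}$ has $-1$ at $(k,k)$, $1$ at $(k,k+1)$, zero elsewhere. $H=mL_f(J_m\otimes I_{\bar d})$. $\mathcal M=\{im_1:i=1,\dots,3m_2-1\}$, $\mathcal M^C=\{1,\dots,m-1\}\setminus\mathcal M$; $\bar A=mL_f(J_{\mathcal M}\otimes I_{\bar d})$, $A=mL_f(J_{\mathcal M^C}\otimes I_{\bar d})$ where $J_{\mathcal M},J_{\mathcal M^C}$ are the rows of $J_m$ indexed by $\mathcal M,\mathcal M^C$. $[\bar A;A]$ is $\bar A$ stacked above $A$. For a matrix $M$, $\kappa(M)=\sqrt{\lambda_{\max}(MM^\top)/\lambda^+_{\min}(MM^\top)}$, where $\lambda^+_{\min}$ is the smallest positive eigenvalue. *)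

(* Defs.v *)
From HB Require Import structures.
From mathcomp Require Import all_boot all_order all_algebra.
From mathcomp Require Import mxtens.
From mathcomp Require Import boolp classical_sets reals trigo.
Set Implicit Arguments. Unset Strict Implicit. Unset Printing Implicit Defensive.
Import Order.TTheory GRing.Theory Num.Theory.
Local Open Scope ring_scope.

Definition Jmx (R : pzRingType) (p : nat) : 'M[R]_(p.-1, p) :=
  \matrix_(k < p.-1, j < p)
    ((- 1) *+ (j == k :> nat) + 1 *+ (j == k.+1 :> nat)).

Definition rows_of (R : Type) (p q : nat) (S : {set 'I_p}) (M : 'M[R]_(p, q))
  : 'M[R]_(#|S|, q) := rowsub (@enum_val _ (mem S)) M.

Section Defs.
Variable R : realType.
Variables (Lf : R) (m1 m2 d : nat).

Definition mm : nat := 3 * m1 * m2.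

(* the index set M = { i*m1 : i = 1..3m2-1 } of (1-indexed) rows of J_m;
   row with 0-based index k is row k.+1 in 1-based numbering *)
Definition Mset : {set 'I_(mm.-1)} :=
  [set k : 'I_(mm.-1) | [exists i : 'I_(3 * m2), (0 < i)%N && (k.+1 == i * m1)%N]].

Definition Hmx : 'M[R]_(mm.-1 * d, mm * d) :=
  (mm%:R * Lf) *: (Jmx R mm *t (1%:M : 'M[R]_d)).

Definition Abarmx : 'M[R]_(#|Mset| * d, mm * d) :=
  (mm%:R * Lf) *: (rows_of Mset (Jmx R mm) *t (1%:M : 'M[R]_d)).

Definition Amx : 'M[R]_(#|~: Mset| * d, mm * d) :=
  (mm%:R * Lf) *: (rows_of (~: Mset) (Jmx R mm) *t (1%:M : 'M[R]_d)).

End Defs.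

Local Open Scope classical_set_scope.
Definition lambda_max (R : realType) (n : nat) (S : 'M[R]_n) : R :=
  sup [set a : R | eigenvalue S a].
Definition lambda_min_pos (R : realType) (n : nat) (S : 'M[R]_n) : R :=
  inf [set a : R | eigenvalue S a /\ 0 < a].
Definition kappa (R : realType) (p q : nat) (M : 'M[R]_(p, q)) : R :=
  Num.sqrt (lambda_max (M *m M^T) / lambda_min_pos (M *m M^T)).

(* Main.v *)
Require Import Defs.
From HB Require Import structures.
From mathcomp Require Import all_boot all_order all_algebra.
From mathcomp Require Import mxtens.
From mathcomp Require Import boolp classical_sets reals trigo.
From mathcomp Require Import ring lra zify.
Import Order.TTheory GRing.Theory Num.Theory.
Local Open Scope ring_scope.
Set Implicit Arguments. Unset Strict Implicit. Unset Printing Implicit Defensive.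

Section Trig.
Variable R : realType.

Lemma sin_nx_le (x : R) (k : nat) : 0 <= sin x -> `|sin (k%:R * x)| <= k%:R * sin x.
Proof.
move=> hs; elim: k => [|k IH]; first by rewrite !mul0r sin0 normr0.
rewrite -addn1 natrD mulrDl mul1r sinD.
apply: (le_trans (ler_normD _ _)); rewrite !normrM (ger0_norm hs).
have h1 := cos_max x; have h2 := cos_max (k%:R * x).
have h3 : 0 <= `|sin (k%:R * x)| by [].
have : `|sin (k%:R * x)| * `|cos x| <= `|sin (k%:R * x)|.
  by rewrite -[leRHS]mulr1 ler_wpM2l.
have : `|cos (k%:R * x)| * sin x <= sin x.
  by rewrite -[leRHS]mul1r ler_wpM2r.
lra.
Qed.

Lemma tan_nx_ge (x : R) (k : nat) : 0 <= sin x -> 0 <= cos x ->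
  (forall j, (j <= k)%N -> 0 <= sin (j%:R * x)) ->
  k%:R * sin x * cos (k%:R * x) <= sin (k%:R * x) * cos x.
Proof.
move=> hs hc; elim: k => [|k IH] hj; first by rewrite !mul0r sin0 mul0r.
have IH' := IH (fun j hj' => hj j (leqW hj')).
have hk := hj k (leqnSn k).
rewrite (_ : k.+1%:R * x = k%:R * x + x); last by rewrite -addn1 natrD mulrDl mul1r.
rewrite sinD cosD -addn1 natrD.
have e1 : 0 <= sin (k%:R * x) * sin x * sin x by rewrite !mulr_ge0.
have e2 : k%:R * sin x * cos (k%:R * x) * cos x <= sin (k%:R * x) * cos x * cos x.
  by rewrite ler_wpM2r.
have e3 : 0 <= k%:R * sin (k%:R * x) * sin x * sin x by rewrite !mulr_ge0.
nra.
Qed.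


Lemma ratio_bounds (p q : nat) : (0 < q)%N -> p = (2 * q)%N ->
  p%:R / 4 <= cos (pi / (2 * p)%:R) / sin (pi / (2 * p)%:R) :> R /\
  cos (pi / (2 * p)%:R) / sin (pi / (2 * p)%:R) < p%:R :> R.
Proof.
move=> q0 pq.
set x := pi / (2 * p)%:R.
have pi0 : 0 < pi :> R := pi_gt0 R.
have q1 : 1 <= q%:R :> R by rewrite ler1n.
have pE : p%:R = 2 * q%:R :> R by rewrite pq natrM.
have x2p : (2 * p)%:R = 4 * q%:R :> R by rewrite natrM pE; ring.
have x0 : 0 < x by rewrite /x divr_gt0 // x2p; lra.
have xq : q%:R * x = pi / 4.
  by rewrite /x x2p; field; rewrite pnatr_eq0 -lt0n.
have xp : p%:R * x = pi / 2 by rewrite pE -mulrA xq; field.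
have xle : x <= pi / 4.
  by rewrite -xq -[leLHS]mul1r ler_wpM2r // ltW.
have sx : 0 < sin x by apply: sin_gt0_pihalf; apply/andP; split=> //; lra.
have cx1 : cos x < 1.
  rewrite -cos0 ltr_cos ?in_itv /= ?lexx ?ltW //; lra.
have cx0 : 0 <= cos x by apply: cos_ge0_pihalf; apply/andP; split; lra.
have sp : 1 <= p%:R * sin x.
  by have := sin_nx_le p (ltW sx); rewrite xp sin_pihalf normr1.
have c4 : 0 < cos (pi / 4) :> R by apply: cos_gt0_pihalf; apply/andP; split; lra.
have s4 : sin (pi / 4) = cos (pi / 4) :> R.
  have := sinBpihalf (pi / 4 : R).
  by rewrite (_ : pi / 4 - pi / 2 = - (pi / 4)) ?sinN; [move/eqP; rewrite eqr_opp => /eqP|field].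
have tq : q%:R * sin x <= cos x.
  have := tan_nx_ge (ltW sx) cx0 (k := q).
  rewrite xq s4 => H.
  have : q%:R * sin x * cos (pi / 4) <= cos (pi / 4) * cos x.
    apply: H => j jq; apply: sin_ge0_pi; apply/andP; split.
      by rewrite mulr_ge0 // ltW.
    have : j%:R * x <= q%:R * x by rewrite ler_wpM2r ?ler_nat // ltW.
    lra.
  by rewrite [_ * cos x]mulrC ler_pM2r.
split.
  rewrite ler_pdivrMr // mulrAC ler_pdivlMr // pE; lra.
rewrite ltr_pdivrMr //; lra.
Qed.

Lemma sin_pm1 (p : nat) : (0 < p)%N ->
  sin ((p.-1)%:R * pi / (2 * p)%:R) = cos (pi / (2 * p)%:R) :> R.
Proof.
move=> p0.
have pp : (0 : R) < p%:R by rewrite ltr0n.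
rewrite (_ : (p.-1)%:R * pi / (2 * p)%:R = pi / 2 - pi / (2 * p)%:R).
  by rewrite sinB sin_pihalf cos_pihalf mul1r mul0r subr0.
rewrite -subn1 natrB // natrM; field.
by rewrite pnatr_eq0 -lt0n.
Qed.

Lemma sum_eq1 (n l : nat) (h : nat -> R) :
  \sum_(i < n) h i *+ (i == l :> nat) = h l *+ (l < n)%N.
Proof.
elim: n => [|n IH]; first by rewrite big_ord0.
rewrite big_ord_recr /= IH.
case: (ltngtP l n) => [lt|gt|->].
- by rewrite addr0 ltnS ltnW.
- by rewrite addr0 ltnS leqNgt gt.
- by rewrite add0r ltnSn.
Qed.

Lemma sum_eq2 (n l : nat) (h : nat -> R) :
  \sum_(i < n) h i *+ (i.+1 == l)%N = h l.-1 *+ ((0 < l) && (l <= n))%N.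
Proof.
case: l => [|l]; first by rewrite big1 // => i _.
by rewrite /= (eq_bigr (fun i : 'I_n => h i *+ (i == l :> nat))) ?sum_eq1.
Qed.

Lemma rowJ (p : nat) (h : nat -> R) :
  (\row_(i < p.-1) h i) *m Jmx R p =
  \row_(l < p) (h l.-1 *+ (0 < l)%N - h l *+ (l < p.-1)%N).
Proof.
apply/rowP => l; rewrite !mxE.
rewrite (eq_bigr (fun i : 'I_p.-1 => - (h i *+ (i == l :> nat)) + h i *+ (i.+1 == l)%N)).
  rewrite big_split /= sumrN sum_eq1 sum_eq2 addrC.
  have -> : (l <= p.-1)%N by rewrite -ltnS; case: (p) l => [|pp] [ll hl] //.
  by rewrite andbT.
move=> i _; rewrite !mxE mulrDr !mulrnAr mulrN1 mulr1 mulNrn.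
by rewrite [(l == i :> nat)]eq_sym [(l == i.+1 :> nat)]eq_sym.
Qed.

Lemma rowJt (p : nat) (g : nat -> R) :
  (\row_(l < p) g l) *m (Jmx R p)^T = \row_(i < p.-1) (g i.+1 - g i).
Proof.
apply/rowP => i; rewrite !mxE.
rewrite (eq_bigr (fun l : 'I_p => - (g l *+ (l == i :> nat)) + g l *+ (l == i.+1 :> nat))).
  rewrite big_split /= sumrN !sum_eq1 addrC.
  have hi : (i.+1 < p)%N by case: (p) i => [|pp] [ii hi] //.
  by rewrite hi (ltnW hi).
by move=> l _; rewrite !mxE mulrDr !mulrnAr mulrN1 mulr1 mulNrn.
Qed.

Definition lam (p k : nat) : R := 2 - 2 * cos (k%:R * pi / p%:R).

Lemma sin_kpi (k : nat) : sin (k%:R * pi) = 0 :> R.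
Proof.
elim: k => [|k IH]; first by rewrite mul0r sin0.
by rewrite -addn1 natrD mulrDl mul1r sinDpi IH oppr0.
Qed.

Lemma JJt_eig (p k : nat) : (0 < k)%N -> (k < p)%N ->
  eigenvalue (Jmx R p *m (Jmx R p)^T) (lam p k).
Proof.
move=> k0 kp.
pose th : R := k%:R * pi / p%:R.
pose f (j : nat) := sin (j%:R * th).
have f0 : f 0%N = 0 by rewrite /f mul0r sin0.
have fp : f p = 0.
  rewrite /f /th mulrC divfK ?sin_kpi //.
  by rewrite pnatr_eq0 -lt0n (leq_ltn_trans _ kp).
apply/eigenvalueP; exists (\row_(i < p.-1) f i.+1).
  rewrite mulmxA (rowJ p (fun i => f i.+1)) /=.
  have -> : \row_(l < p) (f l.-1.+1 *+ (0 < l)%N - f l.+1 *+ (l < p.-1)%N)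
            = \row_(l < p) (f l - f l.+1).
    apply/rowP => l; rewrite !mxE; congr (_ - _).
      by case: (nat_of_ord l) => [|ll] /=; rewrite ?f0 ?mulr0n ?mulr1n.
    case: ltnP => hl; first by rewrite mulr1n.
    have -> : l.+1 = p by case: (p) l hl => [|pp] [ll hl] //= h2; apply/eqP; rewrite eqSS eqn_leq h2 -ltnS hl.
    by rewrite fp mulr0n.
  rewrite (rowJt p (fun l => f l - f l.+1)); apply/rowP => i; rewrite !mxE.
  rewrite /lam -/th /f.
  have e1 : i.+2%:R * th = i.+1%:R * th + th by rewrite -(addn1 i.+1) natrD mulrDl mul1r.
  have e2 : i%:R * th = i.+1%:R * th - th by rewrite -(addn1 i) natrD mulrDl mul1r addrK.
  rewrite e1 e2 sinD sinB; ring.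
apply/negP => /eqP/rowP.
have hp : (0 < p.-1)%N by rewrite -subn1 subn_gt0 (leq_ltn_trans k0 kp).
move=> /(_ (Ordinal hp)); rewrite !mxE /f mul1r => /eqP.
apply/negP; rewrite gt_eqF //; apply: sin_gt0_pi; apply/andP; split.
  by rewrite /th divr_gt0 ?mulr_gt0 ?ltr0n ?pi_gt0 // (leq_ltn_trans _ kp).
rewrite /th ltr_pdivrMr ?ltr0n ?(leq_ltn_trans _ kp) //.
by rewrite mulrC ltr_pM2l ?pi_gt0 ?ltr_nat.
Qed.

Lemma th_in (p k : nat) : (0 < p)%N -> (k <= p)%N -> (k%:R * pi / p%:R : R) \in `[0, pi].
Proof.
move=> p0 kp; rewrite in_itv /=; apply/andP; split.
  by rewrite divr_ge0 ?mulr_ge0 ?pi_ge0.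
by rewrite ler_pdivrMr ?ltr0n // mulrC ler_wpM2l ?pi_ge0 ?ler_nat.
Qed.

Lemma lam_inj (p k l : nat) : (0 < p)%N -> (k <= p)%N -> (l <= p)%N ->
  lam p k = lam p l -> k = l.
Proof.
move=> p0 kp lp; rewrite /lam => H.
have : cos (k%:R * pi / p%:R) = cos (l%:R * pi / p%:R) :> R.
  by apply/eqP; rewrite eq_le; apply/andP; split; lra.
move=> /(cos_inj (th_in p0 kp) (th_in p0 lp)).
move/(mulIf (x := p%:R^-1)); rewrite invr_eq0 pnatr_eq0 -lt0n => /(_ p0).
by move/(mulIf (x := pi)); rewrite gt_eqF ?pi_gt0 // => /(_ isT) /eqP; rewrite eqr_nat => /eqP.
Qed.

Lemma lam_le (p k l : nat) : (0 < p)%N -> (k <= l)%N -> (l <= p)%N -> lam p k <= lam p l.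
Proof.
move=> p0 kl lp; rewrite /lam lerD2l lerN2 ler_pM2l //.
have kp := leq_trans kl lp.
case: (ltngtP k l) kl => // [klt|->] _; last by [].
apply: ltW; rewrite ltr_cos ?th_in //.
by rewrite ltr_pM2r ?invr_gt0 ?ltr0n // ltr_pM2r ?pi_gt0 // ltr_nat.
Qed.

Lemma lam_pos (p k : nat) : (0 < k)%N -> (k <= p)%N -> 0 < lam p k.
Proof.
move=> k0 kp; have p0 := leq_trans k0 kp.
rewrite /lam subr_gt0 -[ltRHS]mulr1 ltr_pM2l // -[X in _ < X](cos0 R) ltr_cos ?th_in //.
  by rewrite divr_gt0 ?mulr_gt0 ?ltr0n ?pi_gt0.
by rewrite in_itv /= lexx pi_ge0.
Qed.

Lemma JJt_all (p : nat) (a : R) : (1 < p)%N ->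
  eigenvalue (Jmx R p *m (Jmx R p)^T) a -> exists2 k, (0 < k < p)%N & a = lam p k.
Proof.
move=> p1 Ha.
have p0 : (0 < p)%N by apply: ltnW.
case Hin : (a \in [seq lam p k | k <- iota 1 p.-1]).
  move/mapP: Hin => [k]; rewrite mem_iota add1n prednK // => hk ->.
  by exists k.
exfalso.
set rs := a :: [seq lam p k | k <- iota 1 p.-1].
have nz : char_poly (Jmx R p *m (Jmx R p)^T) != 0 by apply: monic_neq0; apply: char_poly_monic.
have := max_poly_roots nz (rs := rs).
rewrite size_char_poly /= size_map size_iota ltnn => H.
suff : false by []. apply: H.
  rewrite -eigenvalue_root_char Ha /=; apply/allP => b /mapP [k hk ->].
  rewrite -eigenvalue_root_char JJt_eig //; move: hk; rewrite mem_iota add1n prednK //.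
    by case/andP.
  by case/andP.
rewrite Hin /= map_inj_in_uniq ?iota_uniq //.
move=> k l; rewrite !mem_iota !add1n !prednK // => /andP[_ hk] /andP[_ hl].
by apply: lam_inj => //; apply: ltnW.
Qed.

Lemma tens11 (p d : nat) : (1%:M : 'M[R]_p) *t (1%:M : 'M[R]_d) = 1%:M.
Proof.
apply/matrixP => i j.
case: (mxtens_indexP i) => i1 i2; case: (mxtens_indexP j) => j1 j2.
rewrite tensmxE !mxE (inj_eq (can_inj (@mxtens_indexK _ _))) xpair_eqE.
by case: (i1 == j1); case: (i2 == j2); rewrite /= ?mulr1n ?mulr0n ?mulr1 ?mulr0.
Qed.

Lemma tensBl (p q r s : nat) (A B : 'M[R]_(p, q)) (C : 'M[R]_(r, s)) :
  (A - B) *t C = A *t C - B *t C.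
Proof. by apply/matrixP => i j; rewrite !mxE mulrBl. Qed.

Lemma tensZl (p q r s : nat) (b : R) (A : 'M[R]_(p, q)) (C : 'M[R]_(r, s)) :
  (b *: A) *t C = b *: (A *t C).
Proof. by apply/matrixP => i j; rewrite !mxE mulrA. Qed.

Lemma tens_eig (p d : nat) (M : 'M[R]_p) (c2 b : R) : (0 < d)%N ->
  eigenvalue M b -> eigenvalue (c2 *: (M *t (1%:M : 'M[R]_d))) (c2 * b).
Proof.
move=> d0 /eigenvalueP [u uM unz].
apply/eigenvalueP; exists (u *t (const_mx 1 : 'rV[R]_d) : 'rV[R]_(p * d)).
  have := tensmx_mul u (const_mx 1 : 'rV[R]_d) M 1%:M; rewrite uM mulmx1 tensZl => E.
  rewrite -scalemxAr. rewrite [X in c2 *: X = _]E scalerA. by [].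
apply/negP => /eqP /matrixP H.
move/negP: unz; apply; apply/eqP/matrixP => i j.
have := H (mxtens_index (i, i)) (mxtens_index (j, Ordinal d0)).
by rewrite !mxE !mxtens_indexK /= mulr1.
Qed.

Lemma tens_eig_inv (p d : nat) (M : 'M[R]_p) (c2 a : R) : (0 < p)%N -> (0 < d)%N ->
  c2 != 0 -> eigenvalue (c2 *: (M *t (1%:M : 'M[R]_d))) a -> eigenvalue M (a / c2).
Proof.
move=> p0 d0 c0 /eigenvalueP [v vM vnz].
set b := a / c2.
case: (boolP (\det (M - b%:M) == 0)) => [/det0P [u unz uN]|dN].
  apply/eigenvalueP; exists u => //.
  by move/eqP: uN; rewrite mulmxBr subr_eq0 mul_mx_scalar => /eqP.
exfalso; move/negP: vnz; apply.
have Nu : (M - b%:M) \in unitmx by rewrite unitmxE unitfE.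
have Tu : ((M - b%:M) *t (1%:M : 'M[R]_d)) \in unitmx.
  by apply: tensmx_unit; rewrite ?unitmx1 // -lt0n.
have : v *m ((M - b%:M) *t (1%:M : 'M[R]_d)) = 0.
  rewrite tensBl -[b%:M]scalemx1 tensZl tens11 mulmxBr scalemx1 mul_mx_scalar.
  have : v *m (M *t 1%:M) = b *: v.
    apply: (scalerI c0). rewrite scalemxAr vM /b scalerA mulrC mulfVK //.
  by move=> ->; rewrite subrr.
move=> /(congr1 (mulmx^~ (invmx ((M - b%:M) *t (1%:M : 'M[R]_d))))).
by rewrite mulmxK // mul0mx => ->.
Qed.

Local Open Scope classical_set_scope.

Lemma sup_max (E : set R) x : E x -> (forall y, E y -> y <= x) -> sup E = x.
Proof.
move=> Ex ub; apply/eqP; rewrite eq_le; apply/andP; split.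
  by apply: ge_sup; [exists x | exact: ub].
have hs : has_sup E by split; [exists x | exists x; exact: ub].
exact: (sup_upper_bound hs).
Qed.

Lemma inf_min (E : set R) x : E x -> (forall y, E y -> x <= y) -> inf E = x.
Proof.
move=> Ex lb; rewrite /inf (@sup_max _ (- x)) ?opprK //.
by move=> y [z Ez <-]; rewrite lerN2; apply: lb.
Qed.

Local Close Scope classical_set_scope.

Lemma HHt (p d : nat) (c : R) :
  (c *: (Jmx R p *t (1%:M : 'M[R]_d))) *m (c *: (Jmx R p *t (1%:M : 'M[R]_d)))^T
  = (c * c) *: ((Jmx R p *m (Jmx R p)^T) *t (1%:M : 'M[R]_d)).
Proof.
rewrite linearZ /= trmx_tens trmx1 -scalemxAr scalemxAl scalerA -scalemxAl tensmx_mul mulmx1.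
by [].
Qed.

Lemma lam_sin (p k : nat) : (0 < p)%N ->
  lam p k = 4 * sin (k%:R * pi / (2 * p)%:R) ^+ 2.
Proof.
move=> p0; rewrite /lam.
have -> : k%:R * pi / p%:R = (k%:R * pi / (2 * p)%:R) *+ 2 :> R.
  rewrite natrM mulr2n; field; by rewrite pnatr_eq0 -lt0n.
by rewrite cos_mulr2n cos2sin2; ring.
Qed.

Lemma kappaH (p d : nat) (c : R) : (1 < p)%N -> (0 < d)%N -> c != 0 ->
  kappa (c *: (Jmx R p *t (1%:M : 'M[R]_d))) =
  sin ((p.-1)%:R * pi / (2 * p)%:R) / sin (pi / (2 * p)%:R).
Proof.
move=> p1 d0 c0.
have p0 : (0 < p)%N by apply: ltnW.
have pp0 : (0 < p.-1)%N by rewrite -subn1 subn_gt0.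
set c2 := c * c.
have c20 : 0 < c2 by rewrite /c2 -expr2 exprn_even_gt0 // c0 orbT.
have E1 : forall a, eigenvalue (c2 *: ((Jmx R p *m (Jmx R p)^T) *t (1%:M : 'M[R]_d))) a ->
    exists2 k, (0 < k < p)%N & a = c2 * lam p k.
  move=> a /(tens_eig_inv pp0 d0 (lt0r_neq0 c20)) /(JJt_all p1) [k hk ek].
  by exists k => //; rewrite -ek mulrC divfK // lt0r_neq0.
have E2 : forall k, (0 < k < p)%N ->
    eigenvalue (c2 *: ((Jmx R p *m (Jmx R p)^T) *t (1%:M : 'M[R]_d))) (c2 * lam p k).
  by move=> k /andP [k0 kp]; apply: tens_eig => //; apply: JJt_eig.
have Hmax : lambda_max (c *: (Jmx R p *t (1%:M : 'M[R]_d)) *m (c *: (Jmx R p *t (1%:M : 'M[R]_d)))^T)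
    = c2 * lam p p.-1.
  rewrite /lambda_max HHt -/c2; apply: sup_max.
    by apply: E2; rewrite pp0 /= prednK ?leqnn.
  move=> y /E1 [k /andP [k0 kp] ->]; rewrite ler_pM2l //; apply: lam_le => //.
    by rewrite -ltnS prednK.
  by rewrite leq_pred.
have Hmin : lambda_min_pos (c *: (Jmx R p *t (1%:M : 'M[R]_d)) *m (c *: (Jmx R p *t (1%:M : 'M[R]_d)))^T)
    = c2 * lam p 1.
  rewrite /lambda_min_pos HHt -/c2; apply: inf_min.
    split; first by apply: E2; rewrite /= p1.
    by rewrite mulr_gt0 // lam_pos // ltnW.
  move=> y [/E1 [k /andP [k0 kp] ->] _]; rewrite ler_pM2l //; apply: lam_le => //.
  exact: ltnW.
rewrite /kappa Hmax Hmin.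
rewrite invfM mulrACA divff ?mul1r ?lt0r_neq0 //.
rewrite !lam_sin // mul1r.
have s1 : 0 < sin (pi / (2 * p)%:R) :> R.
  apply: sin_gt0_pi; apply/andP; split.
    by rewrite divr_gt0 ?pi_gt0 // ltr0n muln_gt0.
  rewrite ltr_pdivrMr ?ltr0n ?muln_gt0 // -[ltLHS]mulr1 ltr_pM2l ?pi_gt0 //.
  by rewrite ltr1n (leq_trans _ (leq_pmull _ _)).
have s2 : 0 < sin ((p.-1)%:R * pi / (2 * p)%:R) :> R.
  apply: sin_gt0_pi; apply/andP; split.
    by rewrite divr_gt0 ?mulr_gt0 ?pi_gt0 // ltr0n ?muln_gt0.
  rewrite ltr_pdivrMr ?ltr0n ?muln_gt0 // mulrC ltr_pM2l ?pi_gt0 // ltr_nat.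
  by rewrite (leq_ltn_trans (leq_pred p)) // -{1}(mul1n p) ltn_pmul2r.
rewrite invfM mulrACA divff ?mul1r; last by rewrite pnatr_eq0.
rewrite -expr_div_n sqrtr_sqr ger0_norm //.
by rewrite divr_ge0 // ltW.
Qed.

Lemma eig_mxsub (q p : nat) (s : 'I_q -> 'I_p) (t : 'I_p -> 'I_q) (B : 'M[R]_p) a :
  cancel s t -> cancel t s -> eigenvalue B a -> eigenvalue (mxsub s s B) a.
Proof.
move=> st ts /eigenvalueP [v vB vnz].
apply/eigenvalueP; exists (colsub s v).
  apply/rowP => j; rewrite !mxE.
  have := congr1 (fun M : 'rV_p => M 0 (s j)) vB; rewrite !mxE => <-.
  rewrite [RHS](reindex s) /=; last by apply: onW_bij; exists t.
  by apply: eq_bigr => i _; rewrite !mxE.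
apply/negP => /eqP /rowP H; move/negP: vnz; apply; apply/eqP/rowP => k.
by have := H (t k); rewrite !mxE ts.
Qed.

Lemma eig_mxsub_eq (q p : nat) (s : 'I_q -> 'I_p) (t : 'I_p -> 'I_q) (B : 'M[R]_p) :
  cancel s t -> cancel t s -> eigenvalue (mxsub s s B) = eigenvalue B.
Proof.
move=> st ts; apply: boolp.funext => a; apply/idP/idP; last exact: eig_mxsub.
have HB : mxsub t t (mxsub s s B) = B by apply/matrixP => i j; rewrite !mxE !ts.
by move=> H; rewrite -HB; apply: (eig_mxsub ts st H).
Qed.

Lemma kappa_rowsub (q p r : nat) (s : 'I_q -> 'I_p) (t : 'I_p -> 'I_q) (M : 'M[R]_(p, r)) :
  cancel s t -> cancel t s -> kappa (rowsub s M) = kappa M.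
Proof.
move=> st ts; rewrite /kappa /lambda_max /lambda_min_pos.
have -> : rowsub s M *m (rowsub s M)^T = mxsub s s (M *m M^T).
  by apply/matrixP => i j; rewrite !mxE; apply: eq_bigr => k _; rewrite !mxE.
by rewrite (eig_mxsub_eq _ st ts).
Qed.

Definition sig (n d : nat) (S : {set 'I_n}) (i : 'I_(#|S| * d + #|~: S| * d)) : 'I_(n * d) :=
  match split i with
  | inl k => mxtens_index (@enum_val _ (mem S) (mxtens_unindex k).1, (mxtens_unindex k).2)
  | inr k => mxtens_index (@enum_val _ (mem (~: S)) (mxtens_unindex k).1, (mxtens_unindex k).2)
  end.

Lemma sig_inj (n d : nat) (S : {set 'I_n}) : injective (@sig n d S).
Proof.
move=> i1 i2; rewrite /sig.
case E1: (split i1) => [k1|k1]; case E2: (split i2) => [k2|k2];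
  move=> /(can_inj (@mxtens_indexK _ _)) H;
  move: (congr1 fst H) (congr1 snd H) => /= h1 h2.
- move/enum_val_inj: h1 => h1.
  have : mxtens_unindex k1 = mxtens_unindex k2 by apply: injective_projections.
  move/(can_inj (@mxtens_unindexK _ _)) => hk; subst k2.
  by rewrite -[i1]splitK -[i2]splitK E1 E2.
- have := enum_valP (mxtens_unindex k1).1; have := enum_valP (mxtens_unindex k2).1.
  by rewrite h1 inE => /negP.
- have := enum_valP (mxtens_unindex k1).1; have := enum_valP (mxtens_unindex k2).1.
  by rewrite h1 inE => /[swap] /negP.
- move/enum_val_inj: h1 => h1.
  have : mxtens_unindex k1 = mxtens_unindex k2 by apply: injective_projections.
  move/(can_inj (@mxtens_unindexK _ _)) => hk; subst k2.
  by rewrite -[i1]splitK -[i2]splitK E1 E2.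
Qed.

Lemma AA_eq (n r d : nat) (S : {set 'I_n}) (J : 'M[R]_(n, r)) (c : R) :
  col_mx (c *: (rows_of S J *t (1%:M : 'M[R]_d))) (c *: (rows_of (~: S) J *t (1%:M : 'M[R]_d)))
  = rowsub (@sig n d S) (c *: (J *t (1%:M : 'M[R]_d))).
Proof.
apply/matrixP => i j; rewrite !mxE /sig.
by case: (split i) => k; rewrite !mxE mxtens_indexK.
Qed.

Lemma kappa_AA (n r d : nat) (S : {set 'I_n}) (J : 'M[R]_(n, r)) (c : R) :
  kappa (col_mx (c *: (rows_of S J *t (1%:M : 'M[R]_d))) (c *: (rows_of (~: S) J *t (1%:M : 'M[R]_d))))
  = kappa (c *: (J *t (1%:M : 'M[R]_d))).
Proof.
rewrite AA_eq.
have hc : (#|'I_(n * d)| <= #|'I_(#|S| * d + #|~: S| * d)|)%N.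
  by rewrite !card_ord -mulnDl cardsC card_ord.
have [t st ts] := inj_card_bij (@sig_inj n d S) hc.
exact: kappa_rowsub st ts.
Qed.

End Trig.

Theorem lemma3 (R : realType) (Lf : R) (m1 m2 d : nat) :
  0 < Lf -> (2 <= m1)%N -> (1 <= m2)%N -> ~~ odd (m1 * m2) ->
  (5 <= d)%N -> odd d ->
  let m := (3 * m1 * m2)%N in
  let AA := col_mx (Abarmx Lf m1 m2 d) (Amx Lf m1 m2 d) in
  (m%:R / 4 : R) <= kappa AA /\
  kappa AA = kappa (Hmx Lf m1 m2 d) /\
  kappa (Hmx Lf m1 m2 d) =
    sin (((3 * m1 * m2)%N.-1)%:R * (pi : R) / (6 * m1 * m2)%N%:R)
      / sin ((pi : R) / (6 * m1 * m2)%N%:R) /\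
  sin (((3 * m1 * m2)%N.-1)%:R * (pi : R) / (6 * m1 * m2)%N%:R)
      / sin ((pi : R) / (6 * m1 * m2)%N%:R) < (m%:R : R).
Proof.
move=> Lf0 hm1 hm2 hev hd _ m AA.
have e6 : (6 * m1 * m2 = 2 * (3 * m1 * m2))%N by rewrite !mulnA.
rewrite e6.
have p1 : (1 < 3 * m1 * m2)%N.
  by rewrite -mulnA (leq_trans _ (leq_pmulr _ _)) // muln_gt0 (leq_trans _ hm1) // (leq_trans _ hm2).
have p0 : (0 < 3 * m1 * m2)%N by apply: ltnW.
have d0 : (0 < d)%N by apply: leq_trans hd.
have c0 : (mm m1 m2)%:R * Lf != 0.
  by rewrite mulf_neq0 ?pnatr_eq0 -?lt0n // lt0r_neq0.
have KH : kappa (Hmx Lf m1 m2 d) =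
    sin (((3 * m1 * m2)%N.-1)%:R * (pi : R) / (2 * (3 * m1 * m2))%N%:R)
      / sin ((pi : R) / (2 * (3 * m1 * m2))%N%:R).
  by rewrite /Hmx kappaH.
have KA : kappa AA = kappa (Hmx Lf m1 m2 d) by rewrite /AA /Abarmx /Amx /Hmx kappa_AA.
have [h hh] : exists h, (m1 * m2 = 2 * h)%N.
  exists (m1 * m2)./2.
  have := odd_double_half (m1 * m2); rewrite (negbTE hev) add0n => {1}<-.
  by rewrite -muln2 mulnC.
have [q q0 pq] : exists2 q, (0 < q)%N & (3 * m1 * m2 = 2 * q)%N.
  exists (3 * h).
    have : (0 < m1 * m2)%N by rewrite muln_gt0 (leq_trans _ hm1) // (leq_trans _ hm2).
    by rewrite hh; lia.
  by rewrite -mulnA hh; lia.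
have [B1 B2] := @ratio_bounds R _ _ q0 pq.
rewrite sin_pm1 // -/m.
rewrite KA KH sin_pm1 //.
Qed.
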